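(* Let $R,S$ be finite nonempty sets, $k$ a positive integer, $p_r>0$ ($r\in R$), $T=\sum_{r\in R}p_r$, $d_{r,s}\ge0$, and $\kappa<0$. Let $F$ be the set of $(\mathbf x,\mathbf y)$ with $x_s,y_{r,s}\in\{0,1\}$, $\sum_{s\in S}x_s=k$, $y_{r,s}\le x_s$, and $\sum_{s\in S}y_{r,s}=1$ for all $r$. For $\mathbf y$ let $\overline{\mathcal K}(\mathbf y)=\sum_{r\in R}\sum_{s\in S}p_ry_{r,s}e^{-\kappa d_{r,s}}$ and $\mathcal K(\mathbf y)=-\frac1\kappa\ln\left(\frac1T\overline{\mathcal K}(\mathbf y)\right)$. Let $U\subseteq S$ with $|S\setminus U|\ge k$, and $c_s\ge0$ for $s\in U$; set $\sigma(\mathbf x)=\sum_{s\in U}c_sx_s$. Let $\hat{\mathcal K}\in\mathbb R$ and let $(\mathbf x^*,\mathbf y^*,v^*,q^* )$ be optimal for \[ \text{(KPL}^p)\quad \min\ \overline{\mathcal K}(\mathbf y)+Te^{-\kappa\hat{\mathcal K}}(v-1)\ \text{ s.t. } (\mathbf x,\mathbf y)\in F,\ v\ge e^{q},\ q=-\kappa\,\sigma(\mathbf x), \] with $\mathcal K^*=\mathcal K(\mathbf y^* )$. Let $(\mathbf x^{all},\mathbf y^{all})$ be optimal for (KPL)$^{all}$: $\min\{\overline{\mathcal K}(\mathbf y):(\mathbf x,\mathbf y)\in F\}$, and $(\mathbf x^{rem},\mathbf y^{rem})$ optimal for (KPL)$^{rem}$: $\min\{\overline{\mathcal K}(\mathbf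 y):(\mathbf x,\mathbf y)\in F,\ x_s=0\ \forall s\in U\}$. Let $\mathcal K^{all}=\mathcal K(\mathbf y^{all})$ and $\mathcal K^{rem}=\mathcal K(\mathbf y^{rem})$. Then \[ \mathcal K^{all}\le\mathcal K^*\le\mathcal K^{rem}. \]
   Context: (KPL)$^{all}$ is the unpenalized Kolm–Pollak linear facility location model with all potential locations; (KPL)$^{rem}$ is the same model with the penalized locations $U$ removed; the same $\kappa$ (i.e. the same scaling parameter $\alpha$, with $\kappa=\alpha\epsilon$) is used in all three models. *)

(* Defs.v *)
From HB Require Import structures.
From mathcomp Require Import all_boot all_order all_algebra.
From mathcomp Require Import all_classical all_reals all_analysis.
Set Implicit Arguments. Unset Strict Implicit. Unset Printing Implicit Defensive.
Import Order.TTheory GRing.Theory Num.Theory.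
Local Open Scope ring_scope.

Definition feasibleF (R : realType) (Rs Ss : finType) (k : nat)
  (x : Ss -> R) (y : Rs -> Ss -> R) : Prop :=
  [/\ (forall s, x s = 0 \/ x s = 1),
      (forall r s, y r s = 0 \/ y r s = 1),
      \sum_(s : Ss) x s = k%:R,
      (forall r s, y r s <= x s) &
      (forall r, \sum_(s : Ss) y r s = 1)].

Definition Kbar (R : realType) (Rs Ss : finType) (p : Rs -> R)
  (d : Rs -> Ss -> R) (kappa : R) (y : Rs -> Ss -> R) : R :=
  \sum_(r : Rs) \sum_(s : Ss) p r * y r s * expR (- kappa * d r s).

Definition KP (R : realType) (Rs Ss : finType) (p : Rs -> R)
  (d : Rs -> Ss -> R) (kappa : R) (y : Rs -> Ss -> R) : R :=
  - kappa^-1 * ln ((\sum_(r : Rs) p r)^-1 * Kbar p d kappa y).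

Definition sigmaU (R : realType) (Ss : finType) (U : {set Ss}) (c : Ss -> R)
  (x : Ss -> R) : R := \sum_(s in U) c s * x s.

Definition feasibleKPLp (R : realType) (Rs Ss : finType) (k : nat)
  (U : {set Ss}) (c : Ss -> R) (kappa : R)
  (x : Ss -> R) (y : Rs -> Ss -> R) (v q : R) : Prop :=
  [/\ feasibleF k x y, expR q <= v & q = - kappa * sigmaU U c x].

Definition objKPLp (R : realType) (Rs Ss : finType) (p : Rs -> R)
  (d : Rs -> Ss -> R) (kappa Khat : R) (y : Rs -> Ss -> R) (v : R) : R :=
  Kbar p d kappa y + (\sum_(r : Rs) p r) * expR (- kappa * Khat) * (v - 1).

Definition optimal_KPLp (R : realType) (Rs Ss : finType) (k : nat)
  (p : Rs -> R) (d : Rs -> Ss -> R) (U : {set Ss}) (c : Ss -> R)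
  (kappa Khat : R) (x : Ss -> R) (y : Rs -> Ss -> R) (v q : R) : Prop :=
  feasibleKPLp k U c kappa x y v q /\
  forall x' y' v' q', feasibleKPLp k U c kappa x' y' v' q' ->
    objKPLp p d kappa Khat y v <= objKPLp p d kappa Khat y' v'.

Definition optimal_KPLall (R : realType) (Rs Ss : finType) (k : nat)
  (p : Rs -> R) (d : Rs -> Ss -> R) (kappa : R)
  (x : Ss -> R) (y : Rs -> Ss -> R) : Prop :=
  feasibleF k x y /\
  forall x' y', feasibleF k x' y' -> Kbar p d kappa y <= Kbar p d kappa y'.

Definition optimal_KPLrem (R : realType) (Rs Ss : finType) (k : nat)
  (p : Rs -> R) (d : Rs -> Ss -> R) (U : {set Ss}) (kappa : R)
  (x : Ss -> R) (y : Rs -> Ss -> R) : Prop :=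
  (feasibleF k x y /\ forall s, s \in U -> x s = 0) /\
  forall x' y', feasibleF k x' y' -> (forall s, s \in U -> x' s = 0) ->
    Kbar p d kappa y <= Kbar p d kappa y'.

(* Main.v *)
Require Import Defs.
From HB Require Import structures.
From mathcomp Require Import all_boot all_order all_algebra.
From mathcomp Require Import all_classical all_reals all_analysis.
Import Order.TTheory GRing.Theory Num.Theory.
Local Open Scope ring_scope.

Lemma Kbar_gt0 (R : realType) (Rs Ss : finType) (k : nat)
  (p : Rs -> R) (d : Rs -> Ss -> R) (kappa : R) x y :
  (0 < #|Rs|)%N -> (forall r, 0 < p r) -> feasibleF k x y ->
  0 < Kbar p d kappa y.
Proof.
move=> HR Hp [Hx Hy Hsx Hyx Hsy].
have y0 : forall r s, 0 <= y r s by move=> r s; case: (Hy r s) => ->.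
have term0 : forall r s, 0 <= p r * y r s * expR (- kappa * d r s).
  by move=> r s; rewrite mulr_ge0 // ?mulr_ge0 ?(ltW (Hp r)) ?expR_ge0.
have [r0 _] := card_gt0P HR.
have [s0 Hs0] : exists s0, y r0 s0 = 1.
  apply/not_existsP => H.
  have : \sum_s y r0 s = 0.
    by apply: big1 => s _; case: (Hy r0 s) => // /H.
  by rewrite Hsy => /eqP; rewrite oner_eq0.
rewrite /Kbar (bigD1 r0) //= (bigD1 s0) //=.
rewrite -addrA; apply: ltr_pwDl.
  by rewrite Hs0 mulr1 mulr_gt0 ?expR_gt0.
apply: addr_ge0; first by apply: sumr_ge0.
by apply: sumr_ge0 => r _; apply: sumr_ge0.
Qed.

Theorem proposition2 (R : realType) (Rs Ss : finType) (k : nat)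
  (p : Rs -> R) (d : Rs -> Ss -> R) (kappa : R)
  (U : {set Ss}) (c : Ss -> R) (Khat : R)
  (xs : Ss -> R) (ys : Rs -> Ss -> R) (vs qs : R)
  (xall : Ss -> R) (yall : Rs -> Ss -> R)
  (xrem : Ss -> R) (yrem : Rs -> Ss -> R) :
  (0 < #|Rs|)%N -> (0 < #|Ss|)%N -> (0 < k)%N ->
  (forall r, 0 < p r) -> (forall r s, 0 <= d r s) -> kappa < 0 ->
  (k <= #|~: U|)%N -> (forall s, s \in U -> 0 <= c s) ->
  optimal_KPLp k p d U c kappa Khat xs ys vs qs ->
  optimal_KPLall k p d kappa xall yall ->
  optimal_KPLrem k p d U kappa xrem yrem ->
  KP p d kappa yall <= KP p d kappa ys <= KP p d kappa yrem.
Proof.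
move=> HR HS Hk Hp Hd Hkap HU Hc [[Fs Hv Hq] Os] [Fa Oa] [[Fr Hr0] Or].
have T0 : 0 < \sum_r p r.
  have [r0 _] := card_gt0P HR.
  rewrite (bigD1 r0) //=; apply: ltr_pwDl => //.
  by apply: sumr_ge0 => r _; exact: ltW.
have K1 : Kbar p d kappa yall <= Kbar p d kappa ys by exact: Oa Fs.
have K2 : Kbar p d kappa ys <= Kbar p d kappa yrem.
  have sig0 : sigmaU U c xrem = 0.
    by apply: big1 => s /Hr0 ->; rewrite mulr0.
  have Fr' : feasibleKPLp k U c kappa xrem yrem 1 0.
    by split => //; rewrite ?expR0 // sig0 mulr0.
  have := Os _ _ _ _ Fr'; rewrite /objKPLp subrr mulr0 addr0.
  apply: le_trans; rewrite lerDl; apply: mulr_ge0.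
    by apply: mulr_ge0; [exact: ltW | exact: expR_ge0].
  rewrite subr_ge0; apply: le_trans Hv.
  have q0 : 0 <= qs.
    rewrite Hq; apply: mulr_ge0; first by rewrite oppr_ge0 ltW.
    apply: sumr_ge0 => s /Hc cs; apply: mulr_ge0 => //.
    by case: Fs => Hx _ _ _ _; case: (Hx s) => ->.
  by apply: le_trans (expR_ge1Dx qs); rewrite lerDl.
have Pa : 0 < Kbar p d kappa yall by exact: (@Kbar_gt0 R Rs Ss k p d kappa xall yall HR Hp Fa).
have Ps : 0 < Kbar p d kappa ys by apply: lt_le_trans K1.
have Pr : 0 < Kbar p d kappa yrem by apply: lt_le_trans K2.
have ck : 0 < - kappa^-1 by rewrite oppr_gt0 invr_lt0.
have key : forall a b, 0 < a -> a <= b ->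
    - kappa^-1 * ln ((\sum_r p r)^-1 * a) <= - kappa^-1 * ln ((\sum_r p r)^-1 * b).
  move=> a b a0 ab; apply: ler_wpM2l; first exact: ltW.
  have ia : 0 < (\sum_r p r)^-1 * a by rewrite mulr_gt0 // invr_gt0.
  have ib : 0 < (\sum_r p r)^-1 * b by apply: (lt_le_trans ia); apply: ler_wpM2l => //; rewrite invr_ge0 ltW.
  rewrite (ler_ln (x:=_) (y:=_)) ?posrE //.
  by apply: ler_wpM2l => //; rewrite invr_ge0 ltW.
by rewrite /KP; apply/andP; split; apply: key.
Qed.
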